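(* Let $\{w^k\}$ be the sequence of points produced by Algorithm CMA Light (described in the context) applied to $f=\sum_{i=1}^P f_i$ under the standing assumptions. Then $\{w^k\}$ is bounded.
   Context: Standing assumptions: $f_1,\dots,f_P:\mathbb{R}^n\to\mathbb{R}$ are continuously differentiable and $f=\sum_{i=1}^P f_i$; (A1) for every $w_0$ the level set $\{w: f(w)\le f(w_0)\}$ is compact; (A2) each $\nabla f_p$ is Lipschitz continuous with a common constant $L>0$; (A3) each $f_p$ is nonnegative and has compact level sets. $\texttt{Inner\_Cycle}(w,\zeta)$: set $\widetilde w_0=w$; for $i=1,\dots,P$: $\tilde f_i=f_i(\widetilde w_{i-1})$, $\tilde d_i=-\nabla f_i(\widetilde w_{i-1})$, $\widetilde w_i=\widetilde w_{i-1}+\zeta\tilde d_i$; output $\widetilde w=\widetilde w_P$, $d=\sum_i\tilde d_i$, $\tilde f=\sum_i\tilde f_i$. $\texttt{EDFL\_Light}(F,w,d,\zeta;\gamma,\delta)$: set $j=0,\alpha=\zeta,f_0=F$. If $F>f(w)-\gamma\alpha\|d\|^2$ return $\alpha=0$. Otherwise, while $f(w+(\alpha/\delta)d)\le\min\{f(w)-\gamma\alpha\|d\|^2,f_j\}$ set $f_{j+1}=f(w+(\alpha/\delta)d)$, $j\leftarrow j+1$, $\alpha\leftarrow\alpha/\delta$. Return $\alpha$ and $f(w+\alpha d)$. Algorithm CMA Light: parameters $\zeta^0>0$, $\theta\in(0,1)$, $\tau>0$, $\gamma\in(0,1)$, $\delta\in(0,1)$; $w^0\in\mathbb{R}^n$;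 set $\tilde f^0=f(w^0)$, $\phi^0=\tilde f^0$. For $k=0,1,\dots$: (1) $(\widetilde w^k,d^k,\tilde f^{k+1})=\texttt{Inner\_Cycle}(w^k,\zeta^k)$. (2) If $\tilde f^{k+1}\le\min\{\phi^k-\gamma\zeta^k,f(w^0)\}$: set $\zeta^{k+1}=\zeta^k$, $\alpha^k=\zeta^k$, $\phi^{k+1}=\tilde f^{k+1}$. (3) Else, if $\|d^k\|\le\tau\zeta^k$: set $\zeta^{k+1}=\theta\zeta^k$, $\alpha^k=\zeta^k$ if $\tilde f^{k+1}\le f(w^0)$ and $\alpha^k=0$ otherwise, and $\phi^{k+1}=\phi^k$. (4) Else: $(\widetilde\alpha^k,\hat f^{k+1})=\texttt{EDFL\_Light}(\tilde f^{k+1},w^k,d^k,\zeta^k;\gamma,\delta)$. If $\widetilde\alpha^k\|d^k\|^2\le\tau\zeta^k$: $\zeta^{k+1}=\theta\zeta^k$ and $\alpha^k=\widetilde\alpha^k$ if $\widetilde\alpha^k>0$ and $\hat f^{k+1}\le f(w^0)$; $\alpha^k=\zeta^k$ if $\widetilde\alpha^k=0$ and $\tilde f^{k+1}\le f(w^0)$; $\alpha^k=0$ otherwise. Else: $\zeta^{k+1}=\zeta^k$ and $\alpha^k=\widetilde\alpha^k$ if $\widetilde\alpha^k>0$ and $\hat f^{k+1}\le f(w^0)$, $\alpha^k=0$ otherwise. In both subcases set $\phi^{k+1}=\min\{\hat f^{k+1},\tilde f^{k+1},\phi^k\}$. (5) Set $w^{k+1}=w^k+\alpha^k d^k$. *)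

(* Defs.v *)
From HB Require Import structures.
From mathcomp Require Import all_boot all_order all_algebra.
From mathcomp Require Import all_classical all_reals all_analysis.
Set Implicit Arguments. Unset Strict Implicit. Unset Printing Implicit Defensive.
Import Order.TTheory GRing.Theory Num.Theory.
Import numFieldNormedType.Exports.
Local Open Scope classical_set_scope.
Local Open Scope ring_scope.

Section CMA.
Variables (R : realType) (n P : nat).

Definition dotv (u v : 'rV[R]_n) : R := \sum_(j < n) u 0 j * v 0 j.
Definition sqnorm (v : 'rV[R]_n) : R := dotv v v.
Definition enorm (v : 'rV[R]_n) : R := Num.sqrt (sqnorm v).

Variables (fs : 'I_P -> 'rV[R]_n -> R) (grads : 'I_P -> 'rV[R]_n -> 'rV[R]_n).

Definition ftot (w : 'rV[R]_n) : R := \sum_(i < P) fs i w.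

(* Inner_Cycle(w, zeta): returns (tilde w, d, tilde f) *)
Definition inner_step (zeta : R) (s : 'rV[R]_n * 'rV[R]_n * R) (i : 'I_P) :=
  let: (w, d, fv) := s in
  (w - zeta *: grads i w, d - grads i w, fv + fs i w).

Definition inner_cycle (w : 'rV[R]_n) (zeta : R) : 'rV[R]_n * 'rV[R]_n * R :=
  foldl (inner_step zeta) (w, 0, 0) (enum 'I_P).

(* EDFL_Light(F, w, d, zeta; gamma, delta), as an input/output relation.
   Loop iteration i has current alpha = zeta/delta^i and stored value f_i,
   with f_0 = F and f_i = f(w + (zeta/delta^i) d) for i >= 1. The loop stops
   at the first j at which the test fails; output alpha = zeta/delta^j and
   fhat = f(w + alpha d). *)
Definition edfl_alpha (zeta delta : R) (i : nat) : R := zeta / delta ^+ i.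

Definition edfl_fj (F : R) (w d : 'rV[R]_n) (zeta delta : R) (i : nat) : R :=
  if i is 0 then F else ftot (w + edfl_alpha zeta delta i *: d).

Definition edfl_test (F : R) (w d : 'rV[R]_n) (zeta gamma delta : R) (i : nat)
  : Prop :=
  ftot (w + (edfl_alpha zeta delta i / delta) *: d) <=
  Num.min (ftot w - gamma * edfl_alpha zeta delta i * sqnorm d)
          (edfl_fj F w d zeta delta i).

Definition edfl_light (F : R) (w d : 'rV[R]_n) (zeta gamma delta : R)
  (alpha fhat : R) : Prop :=
  (F > ftot w - gamma * zeta * sqnorm d -> alpha = 0) /\
  (F <= ftot w - gamma * zeta * sqnorm d ->
     exists j : nat,
       (forall i, (i < j)%N -> edfl_test F w d zeta gamma delta i) /\
       ~ edfl_test F w d zeta gamma delta j /\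
       alpha = edfl_alpha zeta delta j) /\
  fhat = ftot (w + alpha *: d).

(* One iteration k -> k+1 of CMA Light; the state is (w^k, zeta^k, phi^k),
   f0 = f(w^0). *)
Definition cma_step (theta tau gamma delta f0 : R)
  (wk : 'rV[R]_n) (zk phik : R) (w1 : 'rV[R]_n) (z1 phi1 : R) : Prop :=
  let: (wt, d, ft) := inner_cycle wk zk in
  exists alpha : R,
    w1 = wk + alpha *: d /\
    (
      (ft <= Num.min (phik - gamma * zk) f0 /\
       z1 = zk /\ alpha = zk /\ phi1 = ft)
    \/
      (~ (ft <= Num.min (phik - gamma * zk) f0) /\ enorm d <= tau * zk /\
       z1 = theta * zk /\ alpha = (if ft <= f0 then zk else 0) /\
       phi1 = phik)
    \/
      (~ (ft <= Num.min (phik - gamma * zk) f0) /\ ~ (enorm d <= tau * zk) /\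
       exists alt fh : R,
         edfl_light ft wk d zk gamma delta alt fh /\
         phi1 = Num.min fh (Num.min ft phik) /\
         ( (alt * sqnorm d <= tau * zk /\ z1 = theta * zk /\
            alpha = (if (0 < alt) && (fh <= f0) then alt
                     else if (alt == 0) && (ft <= f0) then zk else 0))
         \/ (~ (alt * sqnorm d <= tau * zk) /\ z1 = zk /\
            alpha = (if (0 < alt) && (fh <= f0) then alt else 0))))).

End CMA.

(* Main.v *)
Require Import Defs.
From HB Require Import structures.
From mathcomp Require Import all_boot all_order all_algebra.
From mathcomp Require Import all_classical all_reals all_analysis.
From mathcomp Require Import zify lra.
Import Order.TTheory GRing.Theory Num.Theory.
Import numFieldNormedType.Exports.
Local Open Scope ring_scope.

Lemma cbound (R : realType) n (A : set 'rV[R]_n) :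
  compact A -> exists M, 0 <= M /\ forall x, A x -> `|x| <= M.
Proof.
move=> /compact_bounded H; rewrite /= /bounded_near in H.
case: H => M0 [_ HM].
exists (Num.max 0 M0 + 1); split; first by rewrite addr_ge0 // le_max lexx.
apply: HM; apply: (@le_lt_trans _ _ (Num.max 0 M0)).
  by rewrite le_max lexx orbT.
by rewrite ltrDl.
Qed.

Lemma norm_le_enorm (R : realType) n (v : 'rV[R]_n) : `|v| <= enorm v.
Proof.
change (mx_norm v <= enorm v); rewrite mx_normrE.
apply: bigmax_le => [|[i j] _] /=; first exact: sqrtr_ge0.
rewrite (ord1 i) -sqrtr_sqr; apply: ler_wsqrtr.
rewrite /sqnorm /dotv (bigD1 j) //= expr2 lerDl sumr_ge0 // => k _.
by rewrite -expr2 sqr_ge0.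
Qed.

Lemma entry_le (R : realType) n (v : 'rV[R]_n) j : `|v 0 j| <= `|v|.
Proof.
change (`|v 0 j| <= mx_norm v); rewrite mx_normrE.
exact: (le_bigmax _ (fun ij : 'I_1 * 'I_n => `|v ij.1 ij.2|) (0, j)).
Qed.

Lemma enorm_le (R : realType) n (v : 'rV[R]_n) : enorm v <= n%:R * `|v|.
Proof.
have h0 : 0 <= n%:R * `|v| by rewrite mulr_ge0.
rewrite /enorm -(ger0_norm h0) -sqrtr_sqr; apply: ler_wsqrtr.
rewrite /sqnorm /dotv.
apply: (@le_trans _ _ (\sum_(j < n) `|v|^+2)).
  apply: ler_sum => j _; rewrite -expr2 -real_normK ?num_real //.
  by rewrite lerXn2r ?nnegrE ?entry_le.
rewrite sumr_const card_ord exprMn -[_ *+ n]mulr_natl.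
apply: ler_wpM2r; first exact: sqr_ge0.
rewrite -natrX ler_nat; nia.
Qed.

Lemma ic_inv (R : realType) n P (fs : 'I_P -> 'rV[R]_n -> R) grads v zeta s a :
  a.1.1 = v + zeta *: a.1.2 ->
  (foldl (inner_step fs grads zeta) a s).1.1 =
    v + zeta *: (foldl (inner_step fs grads zeta) a s).1.2.
Proof.
elim: s a => //= i s IH [[x d] fv] /= H; apply: IH => /=.
by rewrite H scalerBr addrA.
Qed.

Lemma ic_bound (R : realType) n P (fs : 'I_P -> 'rV[R]_n -> R) grads zeta
  (beta : R -> R) (B : R) (y : 'rV[R]_n)
  (Hst : forall i x, `|x - zeta *: grads i x| <= beta `|x|)
  (Hmono : forall r r', r <= r' -> beta r <= beta r')
  (HK : forall i x, fs i x <= fs i y -> `|x| <= B)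
  (HB : forall m, B <= iter m beta B) :
  forall s m T a, (`|a.1.1| <= iter m beta B \/ T <= a.2) ->
  `|(foldl (inner_step fs grads zeta) a s).1.1| <= iter (m + size s) beta B \/
  T + \sum_(i <- s) fs i y <= (foldl (inner_step fs grads zeta) a s).2.
Proof.
elim=> [|i s IH] m T [[x d] fv] /= H.
  by rewrite addn0 big_nil addr0.
rewrite big_cons addrA -addSnnS; apply: IH => /=.
case: H => [Hx|HT].
  by left; rewrite (le_trans (Hst i x)) // Hmono.
case: (leP (fs i x) (fs i y)) => h.
  left; rewrite (le_trans (Hst i x)) // (le_trans (Hmono _ _ (HK i x h))) //.
  exact: Hmono.
by right; rewrite lerD // ltW.
Qed.

Theorem lemma3 (R : realType) (n P : nat)
  (fs : 'I_P -> 'rV[R]_n -> R) (grads : 'I_P -> 'rV[R]_n -> 'rV[R]_n)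
  (L : R)
  (* each f_p is continuously differentiable with gradient grads p *)
  (Hdiff : forall p w, differentiable (fs p) w /\
             forall v, 'd (fs p) w v = dotv (grads p w) v)
  (Hcont : forall p, continuous (grads p))
  (* (A1) compact level sets of f *)
  (HA1 : forall w0, compact [set w | ftot fs w <= ftot fs w0])
  (* (A2) common Lipschitz constant for the gradients *)
  (HL : 0 < L)
  (HA2 : forall p w v,
     enorm (grads p w - grads p v) <= L * enorm (w - v))
  (* (A3) each f_p nonnegative with compact level sets *)
  (HA3 : forall p, (forall w, 0 <= fs p w) /\
     forall w0, compact [set w | fs p w <= fs p w0])
  (* parameters *)
  (zeta0 theta tau gamma delta : R)
  (Hzeta0 : 0 < zeta0) (Htheta : 0 < theta < 1) (Htau : 0 < tau)
  (Hgamma : 0 < gamma < 1) (Hdelta : 0 < delta < 1)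
  (w0 : 'rV[R]_n)
  (* the sequences generated by CMA Light *)
  (w : nat -> 'rV[R]_n) (zeta phi : nat -> R)
  (Hw0 : w 0%N = w0) (Hz0 : zeta 0%N = zeta0) (Hphi0 : phi 0%N = ftot fs w0)
  (Hstep : forall k, cma_step fs grads theta tau gamma delta (ftot fs w0)
             (w k) (zeta k) (phi k) (w k.+1) (zeta k.+1) (phi k.+1)) :
  exists M : R, forall k, enorm (w k) <= M.
Proof.
set f0 := ftot fs w0.
have [M0 [M0ge HM0]] := @cbound R n _ (HA1 w0).
have [[y Hy]|HA] := pselect (exists y, f0 < ftot fs y); last first.
  exists (n%:R * M0) => k; rewrite (le_trans (enorm_le _ _ _)) // ler_wpM2l //.
  apply: HM0; rewrite /= leNgt; apply/negP => h; apply: HA; by exists (w k).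
have HBn : \forall M \near +oo, forall i (x : 'rV[R]_n), fs i x <= fs i y -> `|x| <= M.
  apply: filter_forall => i; exact: compact_bounded ((HA3 i).2 y).
have [B1 HB1] := filter_ex HBn.
set B := Num.max B1 0.
have Bge : 0 <= B by rewrite le_max lexx orbT.
have HK : forall i x, fs i x <= fs i y -> `|x| <= B.
  by move=> i x h; rewrite le_max (HB1 i x h).
set Gm := \sum_(i < P) `|grads i 0|.
have Gmge : 0 <= Gm by rewrite sumr_ge0.
have Gi : forall i, `|grads i 0| <= Gm.
  by move=> i; rewrite /Gm (bigD1 i) //= lerDl sumr_ge0.
set c := (n%:R : R).
have cge : 0 <= c by [].
set beta := fun r : R => r + zeta0 * (Gm + L * c * r).
have Hmono : forall r r', r <= r' -> beta r <= beta r'.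
  move=> r r' h; rewrite /beta; apply: lerD => //; apply: ler_wpM2l; first exact: ltW.
  rewrite lerD2l; apply: ler_wpM2l => //; apply: mulr_ge0 => //; exact: ltW.
have Hst : forall z, 0 <= z <= zeta0 -> forall i (x : 'rV[R]_n),
    `|x - z *: grads i x| <= beta `|x|.
  move=> z /andP[z0 z1] i x.
  rewrite (le_trans (ler_normB _ _)) // /beta; apply: lerD => //.
  rewrite normrZ ger0_norm //.
  have hg : `|grads i x| <= Gm + L * c * `|x|.
    have -> : grads i x = grads i 0 + (grads i x - grads i 0) by rewrite addrC subrK.
    rewrite (le_trans (ler_normD _ _)) //; apply: lerD => //.
    rewrite (le_trans (norm_le_enorm _ _ _)) // (le_trans (HA2 _ _ _)) // subr0.
    rewrite -mulrA; apply: ler_wpM2l; first exact: ltW.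
    exact: enorm_le.
  apply: (@le_trans _ _ (z * (Gm + L * c * `|x|))); first by apply: ler_wpM2l.
  apply: ler_wpM2r => //; apply: addr_ge0 => //; apply: mulr_ge0 => //.
  apply: mulr_ge0 => //; exact: ltW.
have HBit : forall m, B <= iter m beta B.
  elim=> //= m IH; apply: (le_trans IH); rewrite /beta lerDl.
  apply: mulr_ge0; first exact: ltW.
  apply: addr_ge0 => //; apply: mulr_ge0; last exact: (le_trans Bge IH).
  apply: mulr_ge0 => //; exact: ltW.
set Bi := iter P beta B.
have Hic : forall v z, 0 <= z <= zeta0 ->
    (inner_cycle fs grads v z).2 <= f0 -> `|(inner_cycle fs grads v z).1.1| <= Bi.
  move=> v z hz hf.
  have := @ic_bound R n P fs grads z beta B y (Hst z hz) Hmono HK HBit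
    (enum 'I_P) 0%N 0 (v, 0, 0) (or_intror (lexx 0)).
  rewrite add0n size_enum_ord add0r big_enum /= -/(inner_cycle fs grads v z).
  case=> // h; exfalso; move: (le_trans h hf); rewrite leNgt.
  by move/negP; apply.
have Hicw : forall v z, (inner_cycle fs grads v z).1.1 =
    v + z *: (inner_cycle fs grads v z).1.2.
  by move=> v z; apply: ic_inv => /=; rewrite scaler0 addr0.
set Mb := Num.max `|w0| (Num.max M0 Bi).
have main : forall k, 0 < zeta k <= zeta0 /\ `|w k| <= Mb.
  elim=> [|k [/andP[zk0 zk1] IHw]].
    by rewrite Hz0 Hw0 Hzeta0 lexx le_max lexx.
  have := Hstep k; rewrite /cma_step.
  have Hw' := Hicw (w k) (zeta k).
  have Hb' := Hic (w k) (zeta k).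
  case E: (inner_cycle fs grads (w k) (zeta k)) Hw' Hb' => [[wt d] ft] /= Hwt Hbt.
  have zk : 0 <= zeta k <= zeta0 by rewrite ltW.
  have Hb'' := Hbt zk.
  have claim : forall alpha, (alpha = 0 \/ (alpha = zeta k /\ ft <= f0) \/
      ftot fs (w k + alpha *: d) <= f0) -> `|w k + alpha *: d| <= Mb.
    move=> alpha [->|[[-> h]|h]].
    - by rewrite scale0r addr0.
    - by rewrite -Hwt !le_max (Hb'' h) !orbT.
    - by rewrite !le_max (HM0 _ h) !orbT.
  have thz : 0 < theta * zeta k <= zeta0.
    case/andP: Htheta => t0 t1.
    rewrite mulr_gt0 //= (le_trans _ zk1) // ler_piMl // ?ltW //.
  case=> alpha [-> H].
  case: H => [[Hft [-> [-> _]]]|[[_ [_ [-> [-> _]]]]|[_ [_ [alt [fh [[_ [_ Hfh]] [_ Hsub]]]]]]]].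
  - split; first by rewrite zk0 zk1.
    apply: claim; right; left; split => //.
    by move: Hft; rewrite le_min => /andP[].
  - split => //; apply: claim; case: ifP => h; [right; left| left] => //.
  - case: Hsub => [[_ [-> ->]]|[_ [-> ->]]]; (split; [by rewrite ?zk0 ?zk1|]);
      apply: claim; case: ifP => [/andP[_ h]|_]; try (by right; right; rewrite -Hfh);
      try (case: ifP => [/andP[_ h]|_]); by [left | right; left].
exists (n%:R * Mb) => k; rewrite (le_trans (enorm_le _ _ _)) // ler_wpM2l //.
by case: (main k).
Qed.
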